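(* Let $Q_k$ be a $K$-subset system and $(X,\tau)$ a $T_0$ space. Then $X$ is $k$-well-filtered if and only if the map $\lambda:X\to K(X)$, $\lambda(x)=[\{x\}]$, is a homeomorphism.
   Context: $Q(X)$: nonempty compact saturated subsets of $X$; a family is filtered if nonempty and any two members contain a third. A $C$-subset system $Q_k$ assigns to each $T_0$ space $X$ a set $Q_k(X)$ with $\{\uparrow x\mid x\in X\}\subseteq Q_k(X)\subseteq Q(X)$. A nonempty $A\subseteq X$ is $k$-Rudin if for some filtered $\mathcal K\subseteq Q_k(X)$, $\overline A$ is a minimal closed set meeting every member of $\mathcal K$; $\mathrm{K}^R(X)$ is the set of $k$-Rudin sets. $Q_k$ is a $K$-subset system if for all $T_0$ spaces $X,Y$, continuous $f:X\to Y$ and $A\in\mathrm K^R(X)$, $f(A)\in\mathrm K^R(Y)$. $X$ is $k$-well-filtered if for every open $U$ and filtered $\mathcal K\subseteq Q_k(X)$, $\bigcap\mathcal K\subseteq U$ implies $K\subseteq U$ for some $K\in\mathcal K$. On $\mathrm K^R(X)$ put $A\sim B$ iff $\overline A=\overline B$; $K(X)$ is the set of classes $[A]$, topologized by the open sets $U^*=\{[A]\mid A\cap U\ne\emptyset\}$, $U\in\tau$. *)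

(* Defs.v *)
From mathcomp Require Import all_boot all_order.
From mathcomp Require Import all_classical all_reals all_analysis.
Set Implicit Arguments. Unset Strict Implicit. Unset Printing Implicit Defensive.
Local Open Scope classical_set_scope.

Definition T0 (X : topologicalType) : Prop := @kolmogorov_space X.

(* specialization order: x <= y iff x \in cl{y};  up x = ↑x *)
Definition up (X : topologicalType) (x : X) : set X :=
  [set y | closure [set y] x].

Definition saturated (X : topologicalType) (A : set X) : Prop :=
  forall x, (forall U : set X, open U -> A `<=` U -> U x) -> A x.

Definition Qset (X : topologicalType) : set (set X) :=
  [set K | K !=set0 /\ compact K /\ saturated K].

(* a subset system: assigns to every space X a family of subsets of X
   (only its values on T0 spaces matter) *)
Definition subset_system := forall X : topologicalType, set (set X).

Definition C_subset_system (Qk : subset_system) : Prop :=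
  forall X : topologicalType, T0 X ->
    (forall x : X, Qk X (up x)) /\ Qk X `<=` @Qset X.

Definition filtered (X : Type) (F : set (set X)) : Prop :=
  F !=set0 /\
  forall K1 K2, F K1 -> F K2 -> exists K3, F K3 /\ K3 `<=` K1 `&` K2.

Definition meets_all (X : Type) (C : set X) (F : set (set X)) : Prop :=
  forall K, F K -> C `&` K !=set0.

Definition kRudin (Qk : subset_system) (X : topologicalType) (A : set X) : Prop :=
  A !=set0 /\
  exists F : set (set X), F `<=` Qk X /\ filtered F /\
    meets_all (closure A) F /\
    (forall C : set X, closed C -> C `<=` closure A -> meets_all C F ->
       C = closure A).

Definition K_subset_system (Qk : subset_system) : Prop :=
  C_subset_system Qk /\
  forall (X Y : topologicalType) (f : X -> Y), T0 X -> T0 Y -> continuous f ->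
    forall A : set X, kRudin Qk A -> kRudin Qk (f @` A).

Definition k_well_filtered (Qk : subset_system) (X : topologicalType) : Prop :=
  forall (U : set X) (F : set (set X)), open U -> F `<=` Qk X -> filtered F ->
    \bigcap_(K in F) K `<=` U -> exists2 K, F K & K `<=` U.

(* the equivalence class [A] of a k-Rudin set A (A ~ B iff cl A = cl B) *)
Definition rclass (Qk : subset_system) (X : topologicalType) (A : set X)
  : set (set X) := [set B | kRudin Qk B /\ closure B = closure A].

Definition KX (Qk : subset_system) (X : topologicalType) : set (set (set X)) :=
  [set c | exists A, kRudin Qk A /\ c = rclass Qk A].

Definition ustar (Qk : subset_system) (X : topologicalType) (U : set X)
  : set (set (set X)) :=
  [set c | exists A, [/\ kRudin Qk A, c = rclass Qk A & A `&` U !=set0]].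

Definition KX_open (Qk : subset_system) (X : topologicalType)
  : set (set (set (set X))) :=
  [set V | exists U : set X, open U /\ V = ustar Qk U].

Definition lambda (Qk : subset_system) (X : topologicalType) (x : X)
  : set (set X) := rclass Qk [set x].

Definition homeomorphism_onto (X : topologicalType) (T : Type) (f : X -> T)
  (S : set T) (openS : set (set T)) : Prop :=
  [/\ (forall x, S (f x)),
      injective f,
      (forall s, S s -> exists x, f x = s),
      (forall V, openS V -> open (f @^-1` V)) &
      (forall U : set X, open U -> openS (f @` U))].

(* Main.v *)
Require Import Defs.
From mathcomp Require Import all_boot all_order.
From mathcomp Require Import all_classical all_reals all_analysis.
Set Implicit Arguments. Unset Strict Implicit.
Local Open Scope classical_set_scope.

Lemma cl_pt (X : topologicalType) (x y : X) (W : set X) :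
  closure [set x] y -> open W -> W y -> W x.
Proof.
move=> cl oW Wy; have [z [-> //]] := cl W (open_nbhs_nbhs (conj oW Wy)).
Qed.

Lemma cl_closed_sub (X : topologicalType) (A C : set X) :
  closed C -> A `<=` C -> closure A `<=` C.
Proof. by move=> cC AC; rewrite (closure_id C).1 //; exact: closureS. Qed.

Lemma T0_cl (X : topologicalType) (x y : X) : T0 X ->
  closure [set x] = closure [set y] -> x = y.
Proof.
move=> HX e; apply: contrapT => /eqP /HX [A [[An yA]|[An xA]]].
- have := (@subset_closure _ [set x] x erefl); rewrite e => /(_ A).
  move/set_mem: An => An; case/(_ An) => z [-> Az].
  by move/set_mem: yA; apply.
- have := (@subset_closure _ [set y] y erefl); rewrite -e => /(_ A).
  move/set_mem: An => An; case/(_ An) => z [-> Az].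
  by move/set_mem: xA; apply.
Qed.

Lemma kRudin_pt (Qk : subset_system) (HK : K_subset_system Qk)
  (X : topologicalType) (HX : T0 X) (x : X) : kRudin Qk [set x].
Proof.
split; first by exists x.
exists [set up x]; split; first by move=> K ->; exact: ((HK.1 X HX).1 x).
split; first by split; [exists (up x)| move=> K1 K2 -> ->; exists (up x)].
split; first by move=> K ->; exists x; split; exact: subset_closure.
move=> C cC sC mC; apply/seteqP; split=> //.
apply: cl_closed_sub => // _ ->.
have [y [Cy uy]] := mC _ erefl.
by apply: (cl_closed_sub cC _ uy) => _ ->.
Qed.

Lemma rclassE (Qk : subset_system) (X : topologicalType) (A B : set X) :
  closure A = closure B -> rclass Qk A = rclass Qk B.
Proof. by move=> e; rewrite /rclass e. Qed.

Lemma rclass_cl (Qk : subset_system) (X : topologicalType) (A B : set X) :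
  kRudin Qk A -> rclass Qk A = rclass Qk B -> closure A = closure B.
Proof. by move=> kA e; have : rclass Qk A A by []; rewrite e => -[]. Qed.
Lemma nsub_ex (X : Type) (K W : set X) : ~ K `<=` W -> exists y, K y /\ ~ W y.
Proof.
move=> h; apply: contrapT => h'; apply: h => y Ky; apply: contrapT => nW.
by apply: h'; exists y.
Qed.

Lemma surj_of_kwf (Qk : subset_system) (X : topologicalType) :
  k_well_filtered Qk X -> forall A : set X, kRudin Qk A ->
  exists x, closure A = closure [set x].
Proof.
move=> kwf A [A0 [F [FQ [Ff [mF minF]]]]].
have : exists x, closure A x /\ forall K, F K -> K x.
  apply: contrapT => nx.
  have [K FK KU] := kwf (~` closure A) F (closed_openC (@closed_closure _ A)) FQ Ff
    (fun y Iy cy => nx (ex_intro _ y (conj cy Iy))).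
  by have [z [cz Kz]] := mF K FK; exact: KU z Kz cz.
case=> x [cx Kx]; exists x; symmetry; apply: minF.
- exact: closed_closure.
- by apply: cl_closed_sub; [exact: closed_closure| move=> _ ->].
- by move=> K FK; exists x; split; [exact: subset_closure | exact: Kx].
Qed.
Lemma chain_cover (X : topologicalType) (K : set X) (D : set (set X)) :
  compact K -> D !=set0 -> total_on D subset ->
  (forall W, D W -> open W) -> (forall W, D W -> ~ K `<=` W) ->
  ~ K `<=` \bigcup_(W in D) W.
Proof.
move=> cK D0 Dtot Dop DnK KD.
have Ff : Filter (filter_from D (fun W => K `\` W)).
  apply: filter_from_filter => // i j Di Dj.
  have [ij|ji] := Dtot _ _ Di Dj.
  - by exists j => // y [Ky nj]; split; split => // /ij.
  - by exists i => // y [Ky ni]; split; split => // /ji.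
have PF : ProperFilter (filter_from D (fun W => K `\` W)).
  apply: filter_from_proper => i Di.
  by have [y [Ky nW]] := nsub_ex (DnK i Di); exists y.
have [|x [Kx clx]] := cK _ PF.
  by case: D0 => W DW; exists W => // y [].
have [W0 DW0 W0x] := KD x Kx.
have [z [[Kz nz] W0z]] := clx (K `\` W0) W0
  (in_filter_from _ DW0) (open_nbhs_nbhs (conj (Dop _ DW0) W0x)).
by apply: nz.
Qed.

Lemma kwf_of_surj (Qk : subset_system) (HK : K_subset_system Qk)
  (X : topologicalType) (HX : T0 X) :
  (forall A : set X, kRudin Qk A -> exists x, closure A = closure [set x]) ->
  k_well_filtered Qk X.
Proof.
move=> S U F oU FQ [[K0 FK0] Ffilt] IU.
apply: contrapT => nK.
have nK' : forall K, F K -> ~ K `<=` U by move=> K FK KU; apply: nK; exists K.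
have cptK : forall K, F K -> compact K /\ saturated K.
  by move=> K FK; have [_ []] := (HK.1 X HX).2 K (FQ K FK).
pose P := [set V : set X | open (U `|` V) /\ forall K, F K -> ~ K `<=` U `|` V].
have [V [[oV nV] Vmax]] : exists V, P V /\ forall B, V `<` B -> ~ P B.
  apply: Zorn_bigcup => G GP Gtot; split.
    have -> : U `|` \bigcup_(W in G) W = U `|` \bigcup_(W in G) (U `|` W).
      apply/seteqP; split => y.
        by case=> [|[W GW Wy]]; [left|right; exists W => //; right].
      by case=> [|[W GW [|Wy]]]; [left|left|right; exists W].
    by apply: openU => //; apply: bigcup_open => W GW; exact: (GP W GW).1.
  move=> K FK KU.
  pose D := [set W | W = U \/ exists2 V, G V & W = U `|` V].
  apply: (@chain_cover _ K D (cptK K FK).1).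
  - by exists U; left.
  - move=> W1 W2 [->|[V1 GV1 ->]] [->|[V2 GV2 ->]].
    + by left.
    + by left => y Uy; left.
    + by right => y Uy; left.
    + have [h|h] := Gtot _ _ GV1 GV2.
        by left => y [|/h]; [left|right].
      by right => y [|/h]; [left|right].
  - by move=> W [->|[V1 GV1 ->]] //; exact: (GP V1 GV1).1.
  - by move=> W [->|[V1 GV1 ->]]; [exact: nK'|exact: (GP V1 GV1).2].
  - move=> y /KU [Uy|[W GW Wy]]; first by exists U => //; left.
    by exists (U `|` W); [right; exists W|right].
pose C := ~` (U `|` V).
have cC : closed C by exact: open_closedC.
have clC : closure C = C by rewrite -(closure_id C).1.
have mC : meets_all C F.
  by move=> K FK; have [y [Ky nUy]] := nsub_ex (nV K FK); exists y.
have kC : kRudin Qk C.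
  split; first by have [y [Cy _]] := mC K0 FK0; exists y.
  exists F; rewrite clC; split => //; split; first by split => //; exists K0.
  split => // C' cC' C'C mC'.
  apply/seteqP; split => //.
  have sub : V `<=` ~` C' by move=> y Vy C'y; have := C'C y C'y; apply; right.
  have PV' : P (~` C').
    have e : U `|` ~` C' = ~` C'.
      apply/seteqP; split => y; last by right.
      by case=> // Uy C'y; have := C'C y C'y; apply; left.
    rewrite /P /= e; split; first by apply: closed_openC.
    by move=> K FK KC; have [y [C'y Ky]] := mC' K FK; exact: KC y Ky C'y.
  have sub2 : ~` C' `<=` V.
    by apply: contrapT => h; exact: (Vmax _ (conj sub h) PV').
  move=> y Cy; apply: contrapT => nC'y.
  by apply: Cy; right; exact: sub2.
have [x ex] := S C kC.
rewrite clC in ex.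
have Cx : C x by rewrite ex; exact: subset_closure.
apply: Cx; left; apply: IU => K FK.
have [y [Cy Ky]] := mC K FK.
have clyx : closure [set x] y by rewrite -ex.
apply: (cptK K FK).2 => W oW KW.
exact: cl_pt clyx oW (KW y Ky).
Qed.

Unset Implicit Arguments.

Theorem lemma4 (Qk : subset_system) (HK : K_subset_system Qk)
  (X : topologicalType) (HX : T0 X) :
  k_well_filtered Qk X <->
  homeomorphism_onto (@lambda Qk X) (@KX Qk X) (@KX_open Qk X).
Proof.
split.
- move=> kwf; have surj := surj_of_kwf kwf.
  have kx := kRudin_pt HK HX.
  split.
  + by move=> x; exists [set x]; split.
  + move=> x y e; apply: (T0_cl HX).
    by apply: (rclass_cl (kx x)); exact: e.
  + move=> s [A [kA ->]]; have [x ex] := surj A kA.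
    by exists x; rewrite /lambda; apply: rclassE.
  + move=> _ [U [oU ->]].
    have -> : lambda Qk (X:=X) @^-1` ustar Qk U = U; last by [].
    apply/seteqP; split => x /=.
      case=> A [kA e [a [Aa Ua]]].
      have ec : closure A = closure [set x] by apply: rclass_cl kA _; rewrite -e.
      have : closure [set x] a by rewrite -ec; exact: subset_closure.
      by move=> cl; exact: cl_pt cl oU Ua.
    by move=> Ux; exists [set x]; split => //; exists x.
  + move=> U oU; exists U; split => //.
    apply/seteqP; split.
      by move=> _ [x Ux <-]; exists [set x]; split => //; exists x.
    move=> _ [A [kA -> [a [Aa Ua]]]].
    have [x ex] := surj A kA.
    exists x; last by apply: rclassE.
    have : closure [set x] a by rewrite -ex; exact: subset_closure.
    by move=> cl; exact: cl_pt cl oU Ua.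
- move=> [_ _ hs _ _]; apply: (kwf_of_surj HK HX) => A kA.
  have [x ex] := hs (rclass Qk A) (ex_intro _ A (conj kA erefl)).
  by exists x; apply: (rclass_cl kA); rewrite -ex.
Qed.
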